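(* Let $J_{ab}$ be a non-degenerate skew form on a real vector space of dimension $2n$ with $n\geq 2$, with inverse $J^{ab}$. Suppose $T_{abcd}$ is a tensor with $T_{abcd}=T_{[ab][cd]}$ and $T_{[abc]d}=J_{[ab}\psi_{c]d}$ for some tensor $\psi_{cd}$. Then there are unique tensors $\rho_{ab}$ (no symmetry assumed), $\tau_{ab}=\tau_{[ab]}$, and $X_{abcd}$ with $X_{abcd}=X_{[ab][cd]}$, $X_{[abc]d}=0$ and $J^{ab}X_{abcd}=0$, such that $$T_{abcd}=X_{abcd}+J_{c[a}\rho_{b]d}-J_{d[a}\rho_{b]c}-J_{cd}\rho_{[ab]}+J_{ab}\tau_{cd}.$$
   Context: Abstract index notation; square brackets denote skew-symmetrisation over the enclosed indices. *)

(* Defs.v *)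
(* Tensors on R^(2n) in a fixed basis, indices in 'I_(n.*2). *)
From HB Require Import structures.
From mathcomp Require Import all_boot all_order all_algebra.
From mathcomp Require Import reals.
Set Implicit Arguments. Unset Strict Implicit. Unset Printing Implicit Defensive.
Import Order.TTheory GRing.Theory Num.Theory.
Local Open Scope ring_scope.

Section Tensors.
Variables (R : realType) (m : nat).
Notation I := 'I_m.

Definition tensor2 := I -> I -> R.
Definition tensor4 := I -> I -> I -> I -> R.

Definition skew2 (t : tensor2) : tensor2 := fun a b => (t a b - t b a) / 2%:R.

Definition skew_ab_cd (T : tensor4) : tensor4 := fun a b c d =>
  (T a b c d - T b a c d - T a b d c + T b a d c) / 4%:R.

Definition alt3 (T : tensor4) : tensor4 := fun a b c d =>
  (T a b c d + T b c a d + T c a b d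
   - T b a c d - T a c b d - T c b a d) / 6%:R.

Definition J_wedge_psi (J psi : tensor2) : tensor4 :=
  alt3 (fun a b c d => J a b * psi c d).

Definition J_skew_rho (J rho : tensor2) : tensor4 := fun a b c d =>
  (J c a * rho b d - J c b * rho a d) / 2%:R.

Definition contractJ (Jinv : tensor2) (X : tensor4) : tensor2 := fun c d =>
  \sum_(a < m) \sum_(b < m) Jinv a b * X a b c d.

Definition decomp (J rho tau : tensor2) (X : tensor4) : tensor4 := fun a b c d =>
  X a b c d + J_skew_rho J rho a b c d - J_skew_rho J rho a b d c
  - J c d * skew2 rho a b + J a b * tau c d.

Definition admissible (J : 'M[R]_m) (T : tensor4)
    (rho tau : tensor2) (X : tensor4) : Prop :=
  [/\ forall a b, tau a b = skew2 tau a b,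
      forall a b c d, X a b c d = skew_ab_cd X a b c d,
      forall a b c d, alt3 X a b c d = 0,
      forall c d, contractJ (fun a b => invmx J a b) X c d = 0
    & forall a b c d, T a b c d = decomp (fun a b => J a b) rho tau X a b c d].
End Tensors.

(* Main.v *)
Require Import Defs.
From HB Require Import structures.
From mathcomp Require Import all_boot all_order all_algebra.
From mathcomp Require Import reals.
From mathcomp Require Import ring.
Import Order.TTheory GRing.Theory Num.Theory.
Local Open Scope ring_scope.
Set Implicit Arguments. Unset Strict Implicit. Unset Printing Implicit Defensive.

Section Helpers.
Variables (R : realType) (m : nat).
Notation I := 'I_m.
Variables (J Ji : I -> I -> R).
Hypothesis hJ : forall x y, J y x = - J x y.
Hypothesis hJi : forall x y, Ji y x = - Ji x y.
Hypothesis hJJi : forall a c, \sum_b J a b * Ji b c = (a == c)%:R.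
Hypothesis hJiJ : forall a c, \sum_b Ji a b * J b c = (a == c)%:R.

Definition con2 (f : I -> I -> R) := \sum_a \sum_b Ji a b * f a b.

Lemma eq_con2 f g : (forall a b, f a b = g a b) -> con2 f = con2 g.
Proof. by move=> H; apply eq_bigr => a _; apply eq_bigr => b _; rewrite H. Qed.

Lemma con2D f g : con2 (fun a b => f a b + g a b) = con2 f + con2 g.
Proof.
rewrite /con2 -big_split; apply eq_bigr => a _; rewrite -big_split.
by apply eq_bigr => b _; rewrite mulrDr.
Qed.

Lemma con2N f : con2 (fun a b => - f a b) = - con2 f.
Proof.
rewrite /con2 -sumrN; apply eq_bigr => a _; rewrite -sumrN.
by apply eq_bigr => b _; rewrite mulrN.
Qed.

Lemma con2B f g : con2 (fun a b => f a b - g a b) = con2 f - con2 g.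
Proof. by rewrite con2D con2N. Qed.

Lemma con2Ml k f : con2 (fun a b => k * f a b) = k * con2 f.
Proof.
rewrite /con2 mulr_sumr; apply eq_bigr => a _; rewrite mulr_sumr.
by apply eq_bigr => b _; rewrite mulrCA.
Qed.

Lemma con2Mr k f : con2 (fun a b => f a b * k) = con2 f * k.
Proof. by rewrite mulrC -con2Ml; apply eq_con2 => a b; rewrite mulrC. Qed.

Lemma con2_0 : con2 (fun _ _ => 0) = 0.
Proof. by rewrite /con2 big1 // => a _; rewrite big1 // => b _; rewrite mulr0. Qed.

Lemma sum_delta (g : I -> R) c : \sum_b ((c == b)%:R * g b) = g c.
Proof.
rewrite (bigD1 c) //= eqxx mul1r big1 ?addr0 // => b /negbTE.
by rewrite eq_sym => ->; rewrite mul0r.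
Qed.

Lemma sum_delta' (g : I -> R) c : \sum_b ((b == c)%:R * g b) = g c.
Proof. by rewrite -[RHS](sum_delta g); apply eq_bigr => b _; rewrite eq_sym. Qed.

Lemma con2_swap f : con2 (fun a b => f b a) = - con2 f.
Proof.
rewrite /con2 exchange_big -sumrN; apply eq_bigr => a _; rewrite -sumrN.
by apply eq_bigr => b _; rewrite hJi mulNr.
Qed.

Lemma K1 c (g : I -> R) : con2 (fun a b => J c a * g b) = g c.
Proof.
rewrite /con2 exchange_big /= -(sum_delta g c); apply eq_bigr => b _.
rewrite -hJJi mulr_suml; apply eq_bigr => a _; ring.
Qed.

Lemma K2 c (g : I -> R) : con2 (fun a b => J c b * g a) = - g c.
Proof.
rewrite /con2 -(sum_delta g c) -sumrN; apply eq_bigr => a _.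
rewrite -hJJi mulr_suml -sumrN; apply eq_bigr => b _; rewrite (hJi b a); ring.
Qed.

Lemma K3 c (g : I -> R) : con2 (fun a b => J b c * g a) = g c.
Proof.
rewrite /con2 -(sum_delta' g c); apply eq_bigr => a _.
rewrite -hJiJ mulr_suml; apply eq_bigr => b _; ring.
Qed.

Lemma K4 c (g : I -> R) : con2 (fun a b => J a c * g b) = - g c.
Proof.
rewrite /con2 exchange_big /= -(sum_delta' g c) -sumrN; apply eq_bigr => b _.
rewrite -hJiJ mulr_suml -sumrN; apply eq_bigr => a _; rewrite (hJi a b); ring.
Qed.

Lemma K5 : con2 (fun a b => J a b) = - m%:R.
Proof.
have -> : m%:R = \sum_(a < m) (1 : R) by rewrite sumr_const card_ord.
rewrite /con2 -sumrN; apply eq_bigr => a _.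
have <- : (a == a)%:R = 1 :> R by rewrite eqxx.
rewrite -hJJi -sumrN; apply eq_bigr => b _; rewrite (hJi b a); ring.
Qed.


Lemma CD (rho tau : tensor2 R m) (X : tensor4 R m) c d :
  contractJ Ji (decomp J rho tau X) c d =
  contractJ Ji X c d + rho c d - rho d c - con2 rho * J c d - m%:R * tau c d.
Proof.
have -> : contractJ Ji (decomp J rho tau X) c d =
  con2 (fun a b => (((((((X a b c d + 2^-1 * (J c a * rho b d))
     - 2^-1 * (J c b * rho a d)) - 2^-1 * (J d a * rho b c))
     + 2^-1 * (J d b * rho a c)) - (J c d / 2) * rho a b)
     + (J c d / 2) * rho b a) + J a b * tau c d)).
  rewrite /contractJ /con2; apply eq_bigr => a _; apply eq_bigr => b _.
  rewrite /decomp /J_skew_rho /skew2; congr (_ * _); ring.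
rewrite !con2D !con2N !con2Ml con2Mr K1 K2 K1 K2 (con2_swap rho) K5.
have -> : con2 (fun a b => X a b c d) = contractJ Ji X c d by [].
field. all: by rewrite ?pnatr_eq0.
Qed.

Lemma Alt (rho tau : tensor2 R m) (X : tensor4 R m) a b c d :
  alt3 (decomp J rho tau X) a b c d =
  alt3 X a b c d + J_wedge_psi J rho a b c d + J_wedge_psi J tau a b c d.
Proof.
rewrite /alt3 /decomp /J_wedge_psi /J_skew_rho /skew2 /alt3.
rewrite ?(hJ a b) ?(hJ a c) ?(hJ b c) ?(hJ a d) ?(hJ b d) ?(hJ c d).
field. all: by rewrite ?pnatr_eq0.
Qed.

Lemma wedge_inj (phi : tensor2 R m) : m%:R != 2 :> R ->
  (forall a b c d, J_wedge_psi J phi a b c d = 0) -> forall c d, phi c d = 0.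
Proof.
move=> hm H c d.
have E : con2 (fun a b => J_wedge_psi J phi a b c d) = 0.
  by rewrite -con2_0; apply eq_con2 => a b; rewrite H.
have E2 : con2 (fun a b => J_wedge_psi J phi a b c d) =
  con2 (fun a b => 6^-1 * (((((J a b * phi c d + J b c * phi a d) + J c a * phi b d)
     - J b a * phi c d) - J a c * phi b d) - J c b * phi a d)).
  apply eq_con2 => a b; rewrite /J_wedge_psi /alt3; ring.
rewrite E2 con2Ml !con2D !con2N !con2Mr K3 K1 K4 K2 (con2_swap J) K5 in E.
move: E; set x := phi c d => E.
have : (4 - 2 * m%:R) / 6 * x = 0 by rewrite -E; field; rewrite ?pnatr_eq0.
move/eqP; rewrite mulf_eq0 => /orP [|/eqP //].
rewrite mulf_eq0 invr_eq0 => /orP [|]; last by rewrite pnatr_eq0.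
rewrite subr_eq0 => /eqP h; exfalso; move/eqP: hm; apply.
have : 2 * (m%:R : R) = 2 * 2 by rewrite -h; ring.
by move/mulfI; apply; rewrite pnatr_eq0.
Qed.


Lemma skew_of (f : tensor2 R m) : (forall a b, f a b = skew2 f a b) ->
  forall a b, f b a = - f a b.
Proof.
move=> H a b; have E := H a b; rewrite /skew2 in E.
have E' : f a b * 2 = f a b - f b a by rewrite {1}E; field.
have -> : f b a = f a b - f a b * 2 by rewrite E'; ring.
ring.
Qed.

End Helpers.

Theorem lemma14 (R : realType) (n : nat) (hn : (2 <= n)%N)
  (J : 'M[R]_(n.*2))
  (hJskew : J^T = - J) (hJnd : J \in unitmx)
  (T : tensor4 R (n.*2))
  (hT : forall a b c d, T a b c d = skew_ab_cd T a b c d)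
  (hpsi : exists psi : tensor2 R (n.*2),
     forall a b c d, alt3 T a b c d = J_wedge_psi (fun i j => J i j) psi a b c d) :
  (exists (rho tau : tensor2 R (n.*2)) (X : tensor4 R (n.*2)),
     admissible J T rho tau X) /\
  (forall (rho1 tau1 rho2 tau2 : tensor2 R (n.*2)) (X1 X2 : tensor4 R (n.*2)),
     admissible J T rho1 tau1 X1 -> admissible J T rho2 tau2 X2 ->
     [/\ forall a b, rho1 a b = rho2 a b,
         forall a b, tau1 a b = tau2 a b
       & forall a b c d, X1 a b c d = X2 a b c d]).
Proof.
pose Jf : tensor2 R (n.*2) := fun i j => J i j.
pose Ji : tensor2 R (n.*2) := fun i j => invmx J i j.
have hJ : forall x y, Jf y x = - Jf x y.
  move=> x y; have := congr1 (fun M : 'M[R]_(n.*2) => M x y) hJskew.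
  by rewrite !mxE.
have hJJi : forall a c, \sum_b Jf a b * Ji b c = (a == c)%:R.
  move=> a c; have := congr1 (fun M : 'M[R]_(n.*2) => M a c) (mulmxV hJnd).
  by rewrite !mxE.
have hJiJ : forall a c, \sum_b Ji a b * Jf b c = (a == c)%:R.
  move=> a c; have := congr1 (fun M : 'M[R]_(n.*2) => M a c) (mulVmx hJnd).
  by rewrite !mxE.
have hJi : forall x y, Ji y x = - Ji x y.
  have uN : (-1) *: J \in unitmx by rewrite scaleN1r -hJskew unitmx_tr.
  have E : (invmx J)^T = - invmx J.
    by rewrite trmx_inv hJskew -scaleN1r invmxZ // invrN1 scaleN1r.
  move=> x y; have := congr1 (fun M : 'M[R]_(n.*2) => M x y) E.
  by rewrite !mxE.
have hm2 : (n.*2)%:R != 2 :> R.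
  apply/eqP => h; have : (n.*2 = 2)%N by apply/eqP; rewrite -(eqr_nat R) h.
  by move=> h2'; move: hn; rewrite -(leq_double 2 n) h2'.
have m2 : (n.*2)%:R + 2 != 0 :> R.
  by rewrite -natrD pnatr_eq0 addn2.
have m22 : 2 * (n.*2)%:R + 2 != 0 :> R.
  by rewrite -natrM -natrD pnatr_eq0 addn2.
have h2 : 2 != 0 :> R by rewrite pnatr_eq0.
have Tab : forall a b c d, T b a c d = - T a b c d.
  by move=> a b c d; rewrite hT [in RHS]hT /skew_ab_cd; ring.
have Tcd : forall a b c d, T a b d c = - T a b c d.
  by move=> a b c d; rewrite hT [in RHS]hT /skew_ab_cd; ring.
have CD' := CD hJi hJJi.
have K5' := K5 hJi hJJi.
split.
  case: hpsi => psi hpsi.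
  pose Q : tensor2 R (n.*2) := fun c d => contractJ Ji T c d.
  pose B : tensor2 R (n.*2) := fun c d => psi c d - psi d c - con2 Ji psi * Jf c d - Q c d.
  pose t := con2 Ji B / (2 * (n.*2)%:R + 2).
  pose tau : tensor2 R (n.*2) := fun c d => (B c d + t * Jf c d) / ((n.*2)%:R + 2).
  pose rho : tensor2 R (n.*2) := fun c d => psi c d - tau c d.
  pose D0 := decomp Jf rho tau (fun _ _ _ _ => 0).
  pose X : tensor4 R (n.*2) := fun a b c d => T a b c d - D0 a b c d.
  have Qs : forall c d, Q d c = - Q c d.
    move=> c d; rewrite /Q /contractJ -sumrN; apply eq_bigr => a _.
    rewrite -sumrN; apply eq_bigr => b _; by rewrite Tcd mulrN.
  have Bs : forall c d, B d c = - B c d.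
    by move=> c d; rewrite /B Qs (hJ c d); ring.
  have taus : forall c d, tau d c = - tau c d.
    by move=> c d; rewrite /tau Bs (hJ c d); ring.
  have trtau : con2 Ji tau = t.
    have -> : con2 Ji tau = con2 Ji (fun c d => ((n.*2)%:R + 2)^-1 * (B c d + t * Jf c d)).
      by apply eq_con2 => c d; rewrite /tau mulrC.
    rewrite con2Ml con2D con2Ml K5'.
    have -> : con2 Ji B = t * (2 * (n.*2)%:R + 2) by rewrite /t; field.
    by field.
  have D0ab : forall a b c d, D0 b a c d = - D0 a b c d.
    by move=> a b c d; rewrite /D0 /decomp /J_skew_rho /skew2 (hJ a b); ring.
  have D0cd : forall a b c d, D0 a b d c = - D0 a b c d.
    by move=> a b c d; rewrite /D0 /decomp /J_skew_rho /skew2 (hJ c d) (taus c d); ring.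
  exists rho, tau, X; split.
  - by move=> a b; rewrite /skew2 (taus a b); field.
  - move=> a b c d; rewrite /skew_ab_cd /X (Tab a b d c) (Tab a b c d) (Tcd a b c d) (D0ab a b d c) (D0ab a b c d) (D0cd a b c d); by field.
  - move=> a b c d.
    have -> : alt3 X a b c d = alt3 T a b c d - alt3 D0 a b c d by rewrite /alt3 /X; ring.
    rewrite hpsi /D0 Alt //.
    rewrite /J_wedge_psi /alt3 /rho /Jf; ring.
  - move=> c d.
    have -> : contractJ (fun a b => invmx J a b) X c d = Q c d - contractJ Ji D0 c d.
      by rewrite /contractJ -[X in X - _]/(con2 Ji (fun a b => T a b c d)) -con2B.
    rewrite /D0 CD'.
    have -> : contractJ Ji (fun _ _ _ _ => 0) c d = 0 by exact: con2_0.
    have -> : con2 Ji rho = con2 Ji psi - t by rewrite /rho con2B trtau.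
    rewrite /rho (taus c d) /tau /B; by field.
  - by move=> a b c d; rewrite /X /D0 /decomp /J_skew_rho /skew2 /Jf; ring.
move=> rho1 tau1 rho2 tau2 X1 X2 [t1 X1s X1a X1c T1] [t2 X2s X2a X2c T2].
pose dr : tensor2 R (n.*2) := fun a b => rho1 a b - rho2 a b.
pose dt : tensor2 R (n.*2) := fun a b => tau1 a b - tau2 a b.
pose dX : tensor4 R (n.*2) := fun a b c d => X1 a b c d - X2 a b c d.
have H0 : forall a b c d, decomp Jf dr dt dX a b c d = 0.
  move=> a b c d.
  have -> : decomp Jf dr dt dX a b c d =
     decomp Jf rho1 tau1 X1 a b c d - decomp Jf rho2 tau2 X2 a b c d.
    by rewrite /decomp /J_skew_rho /skew2 /dr /dt /dX; ring.
  by rewrite -T1 -T2 subrr.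
have dXa : forall a b c d, alt3 dX a b c d = 0.
  move=> a b c d.
  have -> : alt3 dX a b c d = alt3 X1 a b c d - alt3 X2 a b c d by rewrite /alt3 /dX; ring.
  by rewrite X1a X2a subrr.
have dXc : forall c d, contractJ Ji dX c d = 0.
  move=> c d; rewrite /contractJ -[LHS]/(con2 Ji (fun a b => X1 a b c d - X2 a b c d)).
  rewrite con2B; have := X1c c d; have := X2c c d; rewrite /contractJ /con2 => -> ->.
  by rewrite subrr.
have t1s := skew_of t1.
have t2s := skew_of t2.
have dts : forall a b, dt b a = - dt a b by move=> a b; rewrite /dt t1s t2s; ring.
have W0 : forall a b c d, J_wedge_psi Jf (fun x y => dr x y + dt x y) a b c d = 0.
  move=> a b c d.
  transitivity (J_wedge_psi Jf dr a b c d + J_wedge_psi Jf dt a b c d).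
    by rewrite /J_wedge_psi /alt3; ring.
  rewrite -[LHS]add0r -(dXa a b c d) addrA -Alt //.
  by rewrite dXa /alt3 !H0; ring.
have Wi := wedge_inj hJi hJJi hJiJ hm2 W0.
have drt : forall x y, dr x y = - dt x y.
  by move=> x y; have := Wi x y => /eqP; rewrite addr_eq0 => /eqP.
have E1 : forall c d, ((n.*2)%:R + 2) * dt c d = con2 Ji dt * Jf c d.
  move=> c d.
  have := CD' dr dt dX c d.
  have -> : contractJ Ji (decomp Jf dr dt dX) c d = 0.
    by rewrite /contractJ big1 // => a _; rewrite big1 // => b _; rewrite H0 mulr0.
  rewrite dXc (drt c d) (drt d c) (dts c d).
  have -> : con2 Ji dr = - con2 Ji dt.
    by rewrite -con2N; apply eq_con2 => x y; rewrite drt.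
  move/eqP; rewrite eq_sym -subr_eq0 => /eqP E.
  apply/eqP; rewrite -subr_eq0; apply/eqP; rewrite -oppr0 -E; ring.
have tr0 : con2 Ji dt = 0.
  have : con2 Ji (fun c d => ((n.*2)%:R + 2) * dt c d) =
         con2 Ji (fun c d => con2 Ji dt * Jf c d) by apply eq_con2 => c d; rewrite E1.
  rewrite !con2Ml K5' => E.
  have : (2 * (n.*2)%:R + 2) * con2 Ji dt = 0 by rewrite -[RHS](subrr (((n.*2)%:R + 2) * con2 Ji dt)) [X in _ = _ - X]E; ring.
  by move/eqP; rewrite mulf_eq0 (negbTE m22) => /eqP.
have dt0 : forall x y, dt x y = 0.
  move=> x y; have := E1 x y; rewrite tr0 mul0r => /eqP.
  by rewrite mulf_eq0 (negbTE m2) => /eqP.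
have dr0 : forall x y, dr x y = 0 by move=> x y; rewrite drt dt0 oppr0.
split.
- by move=> a b; apply/eqP; rewrite -subr_eq0; apply/eqP; exact: dr0.
- by move=> a b; apply/eqP; rewrite -subr_eq0; apply/eqP; exact: dt0.
- move=> a b c d; apply/eqP; rewrite -subr_eq0; apply/eqP.
  have := H0 a b c d; rewrite /decomp /J_skew_rho /skew2 !dr0 !dt0 => E.
  rewrite -[RHS]E; rewrite /dX; ring.
Qed.
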